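(* Let $G$ be a graph with $n$ vertices and $m$ edges. Then $G$ is graceful if and only if $n\leqslant m+1$ and the vertices of $\widehat{G}$ can be arranged (ordered) in such a way that the adjacency matrix of $\widehat{G}$ becomes graceful.
   Context: Graphs are finite, simple and undirected. A graph $G=(V,E)$ with $m$ edges is graceful if there is an injective map $f:V\to\{0,1,\ldots,m\}$ such that the edge labels $|f(u)-f(v)|$, $uv\in E$, are pairwise distinct (such $f$ is a graceful labeling or $\beta$-labeling). If $G$ has $n\le m+1$ vertices, $\widehat{G}$ denotes the graph obtained from $G$ by adding $m+1-n$ isolated vertices. For a $p\times q$ matrix with rows indexed $1,\ldots,p$ and columns $1,\ldots,q$, the box-value of position $(i,j)$ is $p+j-i$, and for each $c=1,\ldots,p+q-1$ the set of positions with box-value $c$ is called a diagonal. A $0$-$1$ matrix is graceful if every diagonal contains at most one entry equal to $1$. *)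

(* Defs.v *)
From mathcomp Require Import all_boot all_order all_algebra.
Set Implicit Arguments. Unset Strict Implicit. Unset Printing Implicit Defensive.

(* A finite simple graph: vertex type T : finType, adjacency e : rel T
   (assumed symmetric and irreflexive in the theorem). *)

Definition edges (T : finType) (e : rel T) : {set {set T}} :=
  [set [set x; y] | x in T, y in T & e x y].

Definition nedges (T : finType) (e : rel T) : nat := #|edges e|.

Definition absdiff (a b : nat) : nat := (a - b) + (b - a).

Definition graceful_labeling (T : finType) (e : rel T) (f : T -> nat) : Prop :=
  injective f /\ (forall x, f x <= nedges e) /\
  (forall x y u v, e x y -> e u v ->
     absdiff (f x) (f y) = absdiff (f u) (f v) -> [set x; y] = [set u; v]).

Definition graceful (T : finType) (e : rel T) : Prop :=
  exists f : T -> nat, graceful_labeling e f.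

Definition hatV (T : finType) (e : rel T) : finType :=
  (T + 'I_((nedges e).+1 - #|T|))%type.

Definition hat_e (T : finType) (e : rel T) : rel (hatV e) :=
  fun u v => match u, v with inl x, inl y => e x y | _, _ => false end.

(* Adjacency matrix of G-hat w.r.t. an arrangement sigma of its vertices
   (sigma i = the vertex placed at row/column i). *)
Definition adj_mx (T : finType) (e : rel T) (p : nat) (sigma : 'I_p -> hatV e)
  : 'M[nat]_(p, p) :=
  \matrix_(i, j) (nat_of_bool (hat_e (sigma i) (sigma j))).

(* Graceful 0-1 matrix: entries in {0,1}, and every diagonal (positions with
   the same box-value p + j - i; with 0-based indices this is the same value)
   contains at most one entry equal to 1. *)
Definition graceful_mx (p q : nat) (A : 'M[nat]_(p, q)) : Prop :=
  (forall i j, A i j = 0 \/ A i j = 1) /\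
  (forall (i i' : 'I_p) (j j' : 'I_q), A i j = 1 -> A i' j' = 1 ->
     p + j - i = p + j' - i' -> i = i' /\ j = j').

(* Main.v *)
Require Import Defs.
From mathcomp Require Import all_boot all_order all_algebra.
From mathcomp Require Import zify.

Theorem theorem2p3 (T : finType) (e : rel T)
  (esym : symmetric e) (eirr : irreflexive e) :
  graceful e <->
  (#|T| <= (nedges e).+1 /\
   exists sigma : 'I_(nedges e).+1 -> hatV e,
     bijective sigma /\ graceful_mx (adj_mx sigma)).
Proof.
split.
- case=> f [finj [fle flab]].
  set m := nedges e.
  pose f' := fun x => (inord (f x) : 'I_m.+1).
  have f'E x : (f' x : nat) = f x by rewrite /f' inordK // ltnS fle.
  have f'inj : injective f'.
    by move=> x y /(congr1 (@nat_of_ord _)); rewrite !f'E; exact: finj.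
  have nle : #|T| <= m.+1 by rewrite -[m.+1]card_ord; apply: leq_card f'inj.
  split=> //.
  pose C := ~: [set i in codom f'].
  have cardC : #|C| = m.+1 - #|T|.
    by rewrite cardsCs setCK card_ord cardsE card_codom.
  pose g := fun u : hatV e => match u with
     | inl x => f' x | inr k => enum_val (cast_ord (Logic.eq_sym cardC) k) end.
  have ginj : injective g.
    move=> [x|k] [y|l] /=.
    + by move/f'inj->.
    + move=> H; have := enum_valP (cast_ord (Logic.eq_sym cardC) l).
      by rewrite -H !inE codom_f.
    + move=> H; have := enum_valP (cast_ord (Logic.eq_sym cardC) k).
      by rewrite H !inE codom_f.
    + by move/enum_val_inj/cast_ord_inj->.
  have gbij : bijective g.
    apply: (inj_card_bij ginj).
    by rewrite /hatV card_sum !card_ord subnKC.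
  case: gbij => sigma gK sK.
  exists sigma; split; first by exists g.
  split.
  + move=> i j; rewrite mxE; case: hat_e; [right|left] => //.
  + have key i j : nat_of_bool (hat_e (sigma i) (sigma j)) = 1 ->
        exists x y, e x y /\ i = f' x /\ j = f' y.
      case Ei: (sigma i) => [x|k]; case Ej: (sigma j) => [y|l] //= H.
      exists x, y; split; first by case: (e x y) H.
      by split; [rewrite -[i]sK Ei | rewrite -[j]sK Ej].
    move=> i i' j j'; rewrite !mxE.
    move=> /key [x [y [exy [-> ->]]]] /key [x' [y' [exy' [-> ->]]]] Hd.
    rewrite !f'E in Hd.
    have := fle x; have := fle y; have := fle x'; have := fle y' => h1 h2 h3 h4.
    have habs : absdiff (f x) (f y) = absdiff (f x') (f y') by rewrite /absdiff; lia.
    have Hs := flab _ _ _ _ exy exy' habs.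
    have : x \in [set x'; y'] by rewrite -Hs set21.
    have : y \in [set x'; y'] by rewrite -Hs set22.
    rewrite !inE => /orP[/eqP Ey|/eqP Ey] /orP[/eqP Ex|/eqP Ex]; subst.
    * by rewrite eirr in exy.
    * have : f y' = f x' by lia.
      move/finj => E; subst; by rewrite eirr in exy.
    * by [].
    * by rewrite eirr in exy.
- case=> _ [sigma [[s' sK s'K] [h01 hd]]].
  pose F := fun x => nat_of_ord (s' (inl x)).
  have Finj : injective F.
    by move=> x y /val_inj /(can_inj s'K) [->].
  exists F; split; [exact: Finj|split].
  + by move=> x; rewrite -ltnS; exact: ltn_ord.
  + have one x y : e x y -> adj_mx sigma (s' (inl x)) (s' (inl y)) = 1.
      by move=> exy; rewrite mxE !s'K /= exy.
    have main x y u v : e x y -> e u v -> F x < F y -> F u < F v ->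
        F y - F x = F v - F u -> x = u /\ y = v.
      move=> exy euv l1 l2 H.
      have := hd _ _ _ _ (one _ _ exy) (one _ _ euv).
      have := ltn_ord (s' (inl x)); have := ltn_ord (s' (inl u)).
      rewrite /F in l1 l2 H => b1 b2.
      case; first by lia.
      move=> /(congr1 sigma) E1 /(congr1 sigma) E2.
      rewrite !s'K in E1 E2; case: E1 => ->; case: E2 => ->; done.
    move=> x y u v exy euv H.
    have nxy : F x != F y.
      apply/eqP => /Finj E; subst; by rewrite eirr in exy.
    have nuv : F u != F v.
      apply/eqP => /Finj E; subst; by rewrite eirr in euv.
    rewrite /absdiff in H.
    case: (ltngtP (F x) (F y)) nxy => // l1 _;
    case: (ltngtP (F u) (F v)) nuv => // l2 _.
    * have [-> ->] := main x y u v exy euv l1 l2 ltac:(lia); done.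
    * rewrite esym in euv.
      have [-> ->] := main x y v u exy euv l1 l2 ltac:(lia); exact: setUC.
    * rewrite esym in exy.
      have [-> ->] := main y x u v exy euv l1 l2 ltac:(lia); exact: setUC.
    * rewrite esym in exy; rewrite esym in euv.
      have [-> ->] := main y x v u exy euv l1 l2 ltac:(lia); done.
Qed.
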